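(* Let $p$ be a prime and $M$, $N$ integers with $p^2>N\ge1$. The linear complexity $L_p(M;N)$ of the sequence $q_p(u)$, $u=M+1,\ldots,M+N$ (viewed as elements of $\mathbb{F}_p$), satisfies $$L_p(M;N)\ge\min\Big\{\frac{p-1}{2},\,\frac{N-p-1}{3}\Big\}.$$
   Context: For a prime $p$ and an integer $u$ with $\gcd(u,p)=1$, the Fermat quotient $q_p(u)$ is the unique integer with $q_p(u)\equiv (u^{p-1}-1)/p \pmod p$ and $0\le q_p(u)\le p-1$; also $q_p(kp)=0$ for all $k\in\mathbb{Z}$. The linear complexity of an $N$-element sequence $s_0,\ldots,s_{N-1}$ in a ring $\mathcal{R}$ is the smallest $L$ such that $s_{u+L}=c_{L-1}s_{u+L-1}+\cdots+c_0s_u$ for all $0\le u\le N-L-1$, for some $c_0,\ldots,c_{L-1}\in\mathcal{R}$. *)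

(* Defs.v *)
From HB Require Import structures.
From mathcomp Require Import all_boot all_order all_algebra.
Set Implicit Arguments. Unset Strict Implicit. Unset Printing Implicit Defensive.
Import Order.TTheory GRing.Theory Num.Theory.
Local Open Scope ring_scope.

(* Fermat quotient q_p(u) for u : int, as an integer in [0, p-1]:
   q_p(u) = ((u^(p-1) - 1)/p) mod p if p does not divide u, and 0 if p | u.
   (For p not dividing u, p divides u^(p-1)-1, so the division is exact.) *)
Definition fermat_quotient (p : nat) (u : int) : int :=
  if (p%:Z %| u)%Z then 0
  else (((u ^+ p.-1 - 1) %/ p%:Z)%Z %% p%:Z)%Z.

Definition has_lin_rec (R : finComNzRingType) (N : nat) (s : nat -> R) (L : nat) : bool :=
  [exists c : {ffun 'I_L -> R},
    [forall u : 'I_N, ((u + L < N)%N) ==>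
       (s (u + L)%N == \sum_(i < L) c i * s (u + i)%N)]].

Lemma has_lin_rec_N (R : finComNzRingType) (N : nat) (s : nat -> R) :
  exists L, has_lin_rec N s L.
Proof.
exists N; apply/existsP; exists [ffun=> 0]; apply/forallP => u.
by rewrite ltnNge leq_addl.
Qed.

Definition linear_complexity (R : finComNzRingType) (N : nat) (s : nat -> R) : nat :=
  ex_minn (has_lin_rec_N N s).

Definition fq_seq (p : nat) (M : int) : nat -> 'F_p :=
  fun k => (fermat_quotient p (M + 1 + k%:Z))%:~R.

(* Main.v *)
Require Import Defs.
From HB Require Import structures.
From mathcomp Require Import all_boot all_order all_algebra.
From mathcomp Require Import all_field ring lra zify.
Import Order.TTheory GRing.Theory Num.Theory.
Local Open Scope ring_scope.

Lemma Fp_intr_eq0 p (z : int) : prime p ->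
  (z%:~R == 0 :> 'F_p) = (p%:Z %| z)%Z.
Proof.
move=> pp; have ch := pchar_Fp pp.
case: z => n; rewrite ?NegzE ?mulrNz ?oppr_eq0 ?dvdzN /= -(dvdn_pcharf ch) //.
Qed.

Lemma binom2 {R : comNzRingType} (a b : R) n :
  exists T, (a + b) ^+ n = a ^+ n + n%:R * b * a ^+ n.-1 + b ^+ 2 * T.
Proof.
elim: n => [|n [T IH]]; first by exists 0; rewrite /= !expr0; ring.
exists (a * T + n%:R * a ^+ n.-1 + b * T).
rewrite exprS IH /=.
have E : a * a ^+ n.-1 = a ^+ n \/ n = 0%N.
  by case: n {IH} => [|n]; [right|left; rewrite -exprS].
case: E => [E|->].
- rewrite /= [a ^+ n.+1]exprS -E mulrS; ring.
- rewrite /=; ring.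
Qed.

Lemma Fp_modz p (z : int) : prime p -> ((z %% p%:Z)%Z%:~R : 'F_p) = z%:~R.
Proof.
move=> pp; rewrite [in RHS](divz_eq z p%:Z) [in RHS]intrD [in RHS]intrM.
by rewrite -[(p%:Z)%:~R]/(p%:R : 'F_p) (pchar_Fp_0 pp) mulr0 add0r.
Qed.

Lemma castE4 (R : pzRingType) (a b c d : int) :
  ((a * b + c * d)%:~R : R) = a%:~R * b%:~R + c%:~R * d%:~R.
Proof. by rewrite intrD !intrM. Qed.

Lemma fq_shift p (u : int) : prime p ->
  ((fermat_quotient p (u + p%:Z))%:~R - (fermat_quotient p u)%:~R : 'F_p)
   = - (u%:~R)^-1.
Proof.
move=> pp; have p0 : ((p%:Z)%:~R : 'F_p) = 0 := pchar_Fp_0 pp.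
rewrite /fermat_quotient.
have Hd : (p%:Z %| u + p%:Z)%Z = (p%:Z %| u)%Z.
  by rewrite -!(Fp_intr_eq0 _ _ pp) rmorphD /= p0 addr0.
rewrite Hd; case: ifP => Hu.
  by move: Hu; rewrite -(Fp_intr_eq0 _ _ pp) => /eqP ->; rewrite invr0 subrr oppr0.
set x : 'F_p := u%:~R.
have x0 : x != 0 by rewrite /x (Fp_intr_eq0 _ _ pp) Hu.
set e := p.-1.
have pe : p = e.+1 by rewrite /e prednK // prime_gt0.
have xe : x ^+ e = 1.
  apply: (mulfI x0); rewrite -exprS -pe mulr1.
  by have := expf_card x; rewrite card_Fp.
have d1 : (p%:Z %| u ^+ e - 1)%Z.
  by rewrite -(Fp_intr_eq0 _ _ pp) rmorphB rmorphXn rmorph1 /= -/x xe subrr.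
have d2 : (p%:Z %| (u + p%:Z) ^+ e - 1)%Z.
  by rewrite -(Fp_intr_eq0 _ _ pp) rmorphB rmorphXn rmorph1 rmorphD /= p0 addr0 -/x xe subrr.
rewrite !Fp_modz //.
have [T HT] := binom2 (u : int) (p%:Z) e.
have E : (((u + p%:Z) ^+ e - 1) %/ p%:Z)%Z - ((u ^+ e - 1) %/ p%:Z)%Z
   = e%:R * u ^+ e.-1 + p%:Z * T.
  have pz : p%:Z != 0 by rewrite eqz_nat -lt0n prime_gt0.
  apply: (mulIf pz); rewrite mulrBl !divzK // HT; ring.
rewrite -intrB E castE4 p0 mul0r addr0 rmorphXn /= -/x.
have -> : (e%:R : int)%:~R = (-1 : 'F_p).
  apply/eqP; rewrite rmorph_nat -subr_eq0 opprK natr1 -pe (pchar_Fp_0 pp) eqxx //.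
rewrite mulN1r; congr (- _).
have e1 : e = e.-1.+1 by rewrite prednK // lt0n /e -subn1 subn_eq0 -ltnNge prime_gt1.
apply: (mulfI x0); rewrite -exprS -e1 xe divff //.
Qed.

Lemma poly_bound (K : fieldType) (L : nat) (d : 'I_L.+1 -> K) (good : seq K) :
  d ord_max != 0 ->
  (forall i j : 'I_L.+1, i != j -> (i%:R : K) != j%:R) ->
  uniq good ->
  (forall t, t \in good -> (forall j : 'I_L.+1, t + j%:R != 0) /\
      \sum_(j < L.+1) d j / (t + j%:R) = 0) ->
  (size good <= L)%N.
Proof.
move=> dL dist ug Hg.
pose G i := \prod_(j < L.+1 | j != i) ('X + (j%:R : K)%:P).
pose F := \sum_(i < L.+1) d i *: G i.
have fnz : forall j : 'I_L.+1, 'X + (j%:R : K)%:P != 0.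
  by move=> j; rewrite -size_poly_eq0 size_XaddC.
have sG : forall i, size (G i) = L.+1.
  move=> i; rewrite /G size_prod; last by move=> j _; apply: fnz.
  rewrite (eq_bigr (fun _ => 2%N)); last by move=> j _; rewrite size_XaddC.
  rewrite sum_nat_const cardC1 card_ord /=; lia.
have sF : (size F <= L.+1)%N.
  apply: leq_trans (size_sum _ _ _) _.
  apply/bigmax_leqP => i _; rewrite -(sG i); exact: size_scale_leq.
have hG : forall i x, (G i).[x] = \prod_(j < L.+1 | j != i) (x + j%:R).
  by move=> i x; rewrite /G horner_prod; apply: eq_bigr => j _; rewrite hornerD hornerX hornerC.
have Fnz : F != 0.
  apply/negP => /eqP F0.
  have : F.[- (L%:R)] = 0 by rewrite F0 horner0.
  rewrite /F horner_sum (bigD1 ord_max) //= big1 ?addr0; last first.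
    move=> i Hi; rewrite hornerZ hG (bigD1 ord_max) //= ?addNr ?mul0r ?mulr0 //.
    by rewrite eq_sym.
  rewrite hornerZ hG; apply/eqP; rewrite mulf_eq0 negb_or dL /=.
  rewrite prodf_seq_neq0; apply/allP => j _; apply/implyP => Hj.
  rewrite addrC subr_eq0; exact: (dist j ord_max Hj).
have Hroot : all (root F) good.
  apply/allP => t /Hg [nz Hs]; rewrite /root.
  pose P := \prod_(j < L.+1) (t + j%:R).
  have HGt : forall i, (G i).[t] = P / (t + i%:R).
    by move=> i; rewrite hG /P [in RHS](bigD1 i) //=; field; apply: nz.
  rewrite /F horner_sum (eq_bigr (fun i => P * (d i / (t + i%:R)))).
    by rewrite -mulr_sumr Hs mulr0.
  by move=> i _; rewrite hornerZ HGt; field.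
have := max_poly_roots Fnz Hroot ug.
move=> H; rewrite -ltnS; exact: leq_trans H sF.
Qed.

Lemma natFp_inj p (a b : nat) : prime p -> (a < p)%N -> (b < p)%N ->
  (a%:R : 'F_p) = b%:R -> a = b.
Proof.
move=> pp ha hb E.
wlog ab : a b ha hb E / (a <= b)%N.
  move=> W; case: (leqP a b) => h; first exact: W.
  by symmetry; apply: W => //; apply: ltnW.
have : (p %| b - a)%N by rewrite (dvdn_pcharf (pchar_Fp pp)) natrB // E subrr.
case: (posnP (b - a)) => [h0 _|hp /(dvdn_leq hp) hl]; first by lia.
by lia.
Qed.

Theorem theorem14 (p : nat) (M : int) (N : nat) :
  prime p -> (1 <= N)%N -> (N < p ^ 2)%N ->
  Num.min ((p%:R - 1) / 2 : rat) ((N%:R - p%:R - 1) / 3)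
    <= (linear_complexity N (fq_seq p M))%:R.
Proof.
move=> pp N1 Np.
rewrite /linear_complexity; case: ex_minnP => L HL _.
suff : ~~ ((2 * L + 2 <= p)%N && (3 * L + p + 2 <= N)%N).
  rewrite negb_and -!ltnNge => /orP [H|H]; rewrite ge_min; apply/orP.
    left; have : (p%:R : rat) <= (2 * L + 1)%N%:R by rewrite ler_nat; lia.
    rewrite !natrD ?natrM => h; lra.
  right; have : (N%:R : rat) <= (3 * L + p + 1)%N%:R by rewrite ler_nat; lia.
  rewrite !natrD ?natrM => h; lra.
apply/negP => /andP [H1 H2].
set s := fq_seq p M.
move/existsP: HL => [c /forallP Hc].
pose d (j : 'I_L.+1) : 'F_p := oapp c (-1) (insub (val j) : option 'I_L).
have dmax : d ord_max = -1 by rewrite /d insubF //= ltnn.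
have rec : forall u, (u + L < N)%N -> \sum_(j < L.+1) d j * s (u + j)%N = 0.
  move=> u Hu; have uN : (u < N)%N by lia.
  have := Hc (Ordinal uN); rewrite /= Hu /= => /eqP E.
  rewrite big_ord_recr /= dmax /s E mulN1r.
  rewrite (eq_bigr (fun j => c j * s (u + j)%N)) ?subrr //.
  move=> j _; congr (_ * _); rewrite /d.
  by rewrite -[val (widen_ord _ j)]/(val j) valK.
set y : 'F_p := (M + 1)%:~R.
have diff : forall k, s (k + p)%N - s k = - (y + k%:R)^-1.
  move=> k; rewrite /s /fq_seq PoszD addrA fq_shift // intrD.
  by rewrite -[(k%:Z)%:~R]/(k%:R : 'F_p).
have key : forall u, (u < 2 * L + 2)%N ->
    \sum_(j < L.+1) d j / (y + u%:R + j%:R) = 0.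
  move=> u hu.
  have E1 := rec (u + p)%N ltac:(lia).
  have E2 := rec u ltac:(lia).
  have : \sum_(j < L.+1) d j * (s (u + j + p)%N - s (u + j)%N) = 0.
    rewrite (eq_bigr (fun j : 'I_L.+1 => d j * s (u + p + j)%N - d j * s (u + j)%N)).
      by rewrite sumrB E1 E2 subrr.
    by move=> j _; rewrite mulrBr addnAC.
  rewrite (eq_bigr (fun j : 'I_L.+1 => - (d j / (y + u%:R + j%:R)))).
    by rewrite sumrN => /eqP; rewrite oppr_eq0 => /eqP.
  by move=> j _; rewrite diff natrD addrA mulrN.
pose S := [seq y + u%:R | u <- iota 0 (2 * L + 2)].
pose bad (t : 'F_p) := [exists j : 'I_L.+1, t + j%:R == 0].
pose good := [seq t <- S | ~~ bad t].
have uS : uniq S.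
  rewrite map_inj_in_uniq ?iota_uniq // => a b; rewrite !mem_iota /= => ha hb.
  move/addrI; apply: natFp_inj => //; lia.
have Hg : forall t, t \in good -> (forall j : 'I_L.+1, t + j%:R != 0) /\
      \sum_(j < L.+1) d j / (t + j%:R) = 0.
  move=> t; rewrite mem_filter => /andP [nb tS]; split.
    by move=> j; apply/negP => hj; move: nb; apply/negP/negPn/existsP; exists j.
  move/mapP: tS => [u]; rewrite mem_iota /= => hu ->; exact: key.
have dist : forall i j : 'I_L.+1, i != j -> (i%:R : 'F_p) != j%:R.
  move=> i j ij; apply/negP => /eqP h.
  have hi := ltn_ord i; have hj := ltn_ord j.
  have h' := natFp_inj p i j pp ltac:(lia) ltac:(lia) h.
  by move: ij; rewrite -val_eqE /= h' eqxx.
have dnz : d ord_max != 0 by rewrite dmax oppr_eq0 oner_eq0.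
have : (size good <= L)%N.
  exact: (@poly_bound _ _ d good dnz dist (filter_uniq _ uS) Hg).
have sB : (size [seq t <- S | bad t] <= L.+1)%N.
  have -> : L.+1 = size [seq - (j%:R : 'F_p) | j : 'I_L.+1 <- enum 'I_L.+1].
    by rewrite size_map size_enum_ord.
  apply: uniq_leq_size; first exact: filter_uniq.
  move=> t; rewrite mem_filter => /andP [/existsP [j /eqP hj] _].
  apply/mapP; exists j; first by rewrite mem_enum.
  by apply/eqP; rewrite -addr_eq0 hj.
move=> hg; have := count_predC bad S.
rewrite size_map size_iota -!size_filter.
have -> : [seq x <- S | predC bad x] = good by [].
move=> E; have := leq_add sB hg; rewrite E; lia.
Qed.
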